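(* Let $N\ge1$ and let $P_N$ be as in the context. For $t\in(0,\pi)$ with $t\ne\frac{2\pi}{N+2}$, $$\operatorname{Im}P_N(e^{it})=\frac{1-\cos\frac{2\pi}{N+2}}{(N+2)(1-\cos t)}\cdot\frac{\sin t\,\bigl(\sin\frac{(N+2)t}{2}\bigr)^2}{\bigl(\cos t-\cos\frac{2\pi}{N+2}\bigr)^2}.$$ In particular $\operatorname{Im}P_N(e^{it})\ge0$ for all $t\in[0,\pi]$, and $P_N$ (which has real coefficients) is typically real in the unit disc $\mathbb D=\{|z|<1\}$, i.e. $\operatorname{Im}P_N(z)\cdot\operatorname{Im}z\ge0$ for $z\in\mathbb D$.
   Context: For an integer $N\ge1$ put, for $k=1,\dots,N$, $$b_k=\frac{(N-k+3)\sin\frac{(k+1)\pi}{N+2}-(N-k+1)\sin\frac{(k-1)\pi}{N+2}}{(N+2)\sin\frac{\pi}{N+2}},$$ and define $P_N(z)=\frac{1}{\sin\frac{2\pi}{N+2}}\sum_{k=1}^N b_k\sin\frac{k\pi}{N+2}\,z^k$. *)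

(* Defs.v *)
From Stdlib Require Import Reals.
Open Scope R_scope.

Definition Cplx : Type := (R * R)%type.
Definition Re (z : Cplx) : R := fst z.
Definition Im (z : Cplx) : R := snd z.
Definition C0 : Cplx := (0, 0).
Definition C1 : Cplx := (1, 0).
Definition Cadd (z w : Cplx) : Cplx := (fst z + fst w, snd z + snd w).
Definition Cmul (z w : Cplx) : Cplx :=
  (fst z * fst w - snd z * snd w, fst z * snd w + snd z * fst w).
Definition Cscale (r : R) (z : Cplx) : Cplx := (r * fst z, r * snd z).
Fixpoint Cpow (z : Cplx) (n : nat) : Cplx :=
  match n with O => C1 | S m => Cmul z (Cpow z m) end.
Definition Cmod (z : Cplx) : R := sqrt (fst z ^ 2 + snd z ^ 2).
Definition Cexpi (t : R) : Cplx := (cos t, sin t).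

Fixpoint csum_1 (f : nat -> Cplx) (n : nat) : Cplx :=
  match n with O => C0 | S m => Cadd (csum_1 f m) (f (S m)) end.

Definition bcoef (N k : nat) : R :=
  ((INR N - INR k + 3) * sin ((INR k + 1) * PI / (INR N + 2))
   - (INR N - INR k + 1) * sin ((INR k - 1) * PI / (INR N + 2)))
  / ((INR N + 2) * sin (PI / (INR N + 2))).

Definition PN (N : nat) (z : Cplx) : Cplx :=
  Cscale (/ sin (2 * PI / (INR N + 2)))
    (csum_1 (fun k => Cscale (bcoef N k * sin (INR k * PI / (INR N + 2))) (Cpow z k)) N).

(* Main.v *)
Require Import Defs.
From Stdlib Require Import Reals Lra Lia ClassicalEpsilon.
From Coquelicot Require Coquelicot.

Module Aux.
Import Coquelicot.Coquelicot.
Open Scope R_scope.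

Lemma sc2 x : cos x ^ 2 + sin x ^ 2 = 1.
Proof. pose proof (sin2_cos2 x). unfold Rsqr in H. nra. Qed.

Lemma Cpow_eq z n : Defs.Cpow z n = Cpow z n.
Proof.
  induction n; simpl.
  - reflexivity.
  - rewrite IHn. reflexivity.
Qed.

Open Scope C_scope.
Lemma Cexpi_mul a b : Cexpi a * Cexpi b = Cexpi (a + b).
Proof.
  unfold Cexpi, Cmult; simpl. rewrite cos_plus, sin_plus. f_equal; ring.
Qed.

Lemma Cexpi_pow t k : Cpow (Cexpi t) k = Cexpi (INR k * t).
Proof.
  induction k.
  - simpl. unfold Cexpi. rewrite Rmult_0_l, cos_0, sin_0. reflexivity.
  - rewrite Cpow_S, IHk, Cexpi_mul. f_equal. rewrite S_INR. ring.
Qed.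

Lemma Cexpi_inv t : / Cexpi t = Cexpi (- t).
Proof.
  unfold Cexpi, Cinv; simpl. rewrite cos_neg, sin_neg. pose proof (sc2 t).
  simpl in H. replace (cos t * (cos t * 1) + sin t * (sin t * 1))%R with 1%R by lra.
  f_equal; field.
Qed.

Lemma Cexpi_neq0 t : (Cexpi t : C) <> 0.
Proof.
  intro H. unfold Cexpi in H. injection H as H1 H2. pose proof (sc2 t).
  rewrite H1, H2 in H. lra.
Qed.

Lemma RtoC_sin x : RtoC (sin x) = (Cexpi x - / Cexpi x) / (2 * Ci).
Proof.
  rewrite Cexpi_inv. unfold Cexpi, Cdiv, Cminus, Copp, Cplus, Cmult, Cinv, Ci, RtoC; simpl.
  rewrite cos_neg, sin_neg. f_equal; field.
Qed.

Lemma RtoC_cos x : RtoC (cos x) = (Cexpi x + / Cexpi x) / 2.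
Proof.
  rewrite Cexpi_inv. unfold Cexpi, Cdiv, Cminus, Copp, Cplus, Cmult, Cinv, Ci, RtoC; simpl.
  rewrite cos_neg, sin_neg. f_equal; field.
Qed.


Lemma Cexpi_minus a b : Cexpi (a - b) = Cexpi a / Cexpi b.
Proof. unfold Cdiv. rewrite Cexpi_inv, Cexpi_mul. reflexivity. Qed.

Ltac ceq := match goal with |- ?a = ?b => change (@eq C a b) end.

Lemma csum_S f n : csum_1 f (S n) = csum_1 f n + f (S n).
Proof. reflexivity. Qed.

Lemma csum_ext f g n : (forall k, (1 <= k <= n)%nat -> f k = g k) -> csum_1 f n = csum_1 g n.
Proof.
  induction n; intros H; simpl; [reflexivity|].
  change (csum_1 f n + f (S n) = csum_1 g n + g (S n)).
  rewrite IHn, H; [reflexivity|lia|]. intros; apply H; lia.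
Qed.

Lemma csum_plus f g n : csum_1 (fun k => f k + g k) n = csum_1 f n + csum_1 g n.
Proof.
  induction n; simpl.
  - change ((0:C) = 0 + 0). ring.
  - change (csum_1 (fun k => f k + g k) n + (f (S n) + g (S n)) = (csum_1 f n + f (S n)) + (csum_1 g n + g (S n))).
    rewrite IHn. ring.
Qed.

Lemma csum_scal c f n : csum_1 (fun k => c * f k) n = c * csum_1 f n.
Proof.
  induction n; simpl.
  - change ((0:C) = c * 0). ring.
  - change (csum_1 (fun k => c * f k) n + c * f (S n) = c * (csum_1 f n + f (S n))).
    rewrite IHn. ring.
Qed.

Lemma geom0 (w : C) N : 1 - w <> 0 -> csum_1 (fun k => w ^ k) N = w * (1 - w ^ N) / (1 - w).
Proof.
  intros H. induction N.
  - simpl. change ((0:C) = w * (1 - 1) / (1 - w)). field. auto.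
  - rewrite csum_S, IHN, Cpow_S. ceq. field. auto.
Qed.

Lemma geom1 (w : C) N : 1 - w <> 0 ->
  csum_1 (fun k => RtoC (INR k) * w ^ k) N
  = w * (1 - (RtoC (INR N) + 1) * w ^ N + RtoC (INR N) * w ^ N * w) / ((1 - w) * (1 - w)).
Proof.
  intros H. induction N.
  - simpl. change ((0:C) = w * (1 - (0 + 1) * 1 + 0 * 1 * w) / ((1 - w) * (1 - w))). field. auto.
  - rewrite csum_S, IHN, !Cpow_S, S_INR, RtoC_plus. ceq. field. auto.
Qed.

Definition G0 (w W : C) := w*(1-W)/(1-w).
Definition G1 (n w W : C) := w*(1-(n+1)*W+n*W*w)/((1-w)*(1-w)).
Definition Sfun (n q w W : C) :=
  (q + /q)/2 * G0 w W
  + (-(1/4)*((n+3)*q-(n+1)/q)) * G0 (q*q*w) (/(q*q*q*q)*W)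
  + (1/4)*(q-/q) * G1 n (q*q*w) (/(q*q*q*q)*W)
  + (-(1/4)*((n+3)/q-(n+1)*q)) * G0 (w/(q*q)) (W*(q*q*q*q))
  + (1/4)*(/q-q) * G1 n (w/(q*q)) (W*(q*q*q*q)).

Lemma nzE4 (q z : C) : 1 - q*q*z <> 0 -> z - q*q <> 0 -> (z * z + 1) * (q * q) - (q * q * (q * q) + 1) * z <> 0.
Proof.
  intros H2 H3.
  replace ((z * z + 1) * (q * q) - (q * q * (q * q) + 1) * z) with ((-1)*(1 - q*q*z) * (z - q*q)) by (ceq; ring).
  repeat apply Cmult_neq_0; auto. intro E. apply (f_equal fst) in E. simpl in E. lra.
Qed.

Lemma nzE5 (z : C) : 1 - z <> 0 -> z * 2 - (z * z + 1) <> 0.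
Proof.
  intros H1. replace (z * 2 - (z * z + 1)) with ((-1)*((1-z)*(1-z))) by (ceq; ring).
  repeat apply Cmult_neq_0; auto. intro E. apply (f_equal fst) in E. simpl in E. lra.
Qed.

Lemma big (n q z Z : C) : q <> 0 -> z <> 0 -> Z <> 0 ->
  1 - z <> 0 -> 1 - q*q*z <> 0 -> z - q*q <> 0 -> q*q - 1 <> 0 -> q*q*q*q - 1 <> 0 ->
  n + 2 <> 0 ->
  -4*(Sfun n q z Z - Sfun n q (/z) (/Z)) / ((n+2) * (q - /q) * (q*q - /(q*q)))
  = (1 - (q*q + /(q*q))/2) / ((n+2) * (1 - (z + /z)/2)) *
    ((z - /z) * ((2 - Z*z*z - /(Z*z*z))/4) / (((z + /z)/2 - (q*q + /(q*q))/2)*((z + /z)/2 - (q*q + /(q*q))/2))).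
Proof.
  intros Hq Hz HZ H1 H2 H3 H4 H5 Hn.
  assert (E1 : z * (q*q) - 1 <> 0).
  { intro E; apply H2. replace (1 - q*q*z) with (-(z*(q*q) - 1)) by ring. rewrite E. ring. }
  assert (E2 : q*q - z <> 0).
  { intro E; apply H3. replace (z - q*q) with (-(q*q - z)) by ring. rewrite E. ring. }
  assert (E3 : z - 1 <> 0).
  { intro E; apply H1. replace (1 - z) with (-(z - 1)) by ring. rewrite E. ring. }
  assert (E4 : (z * z + 1) * (q * q) - (q * q * (q * q) + 1) * z <> 0).
  { replace ((z * z + 1) * (q * q) - (q * q * (q * q) + 1) * z) with ((z*(q*q) - 1) * (z - q*q)) by ring.
    apply Cmult_neq_0; auto. }
  assert (E5 : z * 2 - (z * z + 1) <> 0).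
  { replace (z * 2 - (z * z + 1)) with (-((z-1)*(z-1))) by ring.
    intro E. apply (Cmult_neq_0 _ _ E3 E3). replace ((z-1)*(z-1)) with (-(-((z-1)*(z-1)))) by ring. rewrite E. ring. }
  assert (E6 : q*q*(q*q) - 1 <> 0) by (replace (q*q*(q*q)) with (q*q*q*q) by ring; auto).
  unfold Sfun, G0, G1. field. repeat split; auto.
Qed.


Definition Sterm (n q w : C) (k : nat) : C :=
  (q + /q)/2 * w ^ k
  + (-(1/4)*((n+3)*q-(n+1)/q)) * (q*q*w) ^ k
  + (1/4)*(q-/q) * (RtoC (INR k) * (q*q*w) ^ k)
  + (-(1/4)*((n+3)/q-(n+1)*q)) * (w/(q*q)) ^ k
  + (1/4)*(/q-q) * (RtoC (INR k) * (w/(q*q)) ^ k).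

Lemma sum_Sterm (q w : C) N : q <> 0 -> w <> 0 -> q ^ N = - / (q*q) ->
  1 - w <> 0 -> 1 - q*q*w <> 0 -> 1 - w/(q*q) <> 0 ->
  csum_1 (fun k => Sterm (RtoC (INR N)) q w k) N = Sfun (RtoC (INR N)) q w (w ^ N).
Proof.
  intros Hq Hw HqN H1 H2 H3. unfold Sterm.
  rewrite !csum_plus, !csum_scal, geom0, geom0, geom1, geom0, geom1; auto.
  unfold Sfun, G0, G1.
  assert (E1 : (q*q*w) ^ N = /(q*q*q*q) * w ^ N).
  { rewrite !Cpow_mult_l, HqN. ceq. field. auto. }
  assert (E2 : (w/(q*q)) ^ N = w ^ N * (q*q*q*q)).
  { unfold Cdiv. rewrite !Cpow_mult_l, Cpow_inv, Cpow_mult_l, HqN. ceq. field. all: repeat split; repeat apply Cmult_neq_0; auto. }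
  rewrite E1, E2. reflexivity.
  all: repeat apply Cmult_neq_0; auto.
Qed.


Open Scope R_scope.
Lemma cos_lt1 x : 0 < x < 2*PI -> cos x < 1.
Proof.
  intros H. replace x with (2 * (x/2)) by field. rewrite cos_2a_sin.
  assert (0 < sin (x/2)) by (apply sin_gt_0; lra). nra.
Qed.

Lemma cos_lt1' x : -(2*PI) < x < 0 -> cos x < 1.
Proof. intros H. rewrite <- cos_neg. apply cos_lt1. lra. Qed.

Lemma nz_expi x : cos x < 1 -> (1 - Cexpi x <> 0)%C.
Proof.
  intros H E. apply (f_equal fst) in E. unfold Cexpi in E. simpl in E. lra.
Qed.

Definition th N := PI / (INR N + 2).
Definition acoef N k := / sin (2 * PI / (INR N + 2)) * (bcoef N k * sin (INR k * PI / (INR N + 2))).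

Lemma th_bounds N : (1 <= N)%nat -> 0 < th N <= PI/3.
Proof.
  intros H. unfold th. assert (1 <= INR N) by (apply (le_INR 1); auto).
  pose proof PI_RGT_0. split. apply Rdiv_lt_0_compat; lra.
  apply Rmult_le_compat_l; [lra|]. apply Rinv_le_contravar; lra.
Qed.

Open Scope C_scope.
Lemma term_k N k t :
  (1 <= N)%nat ->
  let n := RtoC (INR N) in let q : C := Cexpi (th N) in let z : C := Cexpi t in
  1 - z <> 0 -> 1 - /z <> 0 ->
  RtoC (acoef N k * sin (INR k * t))
  = /(2*Ci) * (-4 / ((n+2)*(q - /q)*(q*q - /(q*q)))) * (Sterm n q z k - Sterm n q (/z) k).
Proof.
  intros HN n q z Hz1 Hz2.
  pose proof (th_bounds N HN) as Hth. pose proof PI_RGT_0 as HPI.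
  assert (HN2 : (INR N + 2 <> 0)%R) by (pose proof (pos_INR N); lra).
  assert (Hs1 : sin (th N) <> 0%R) by (apply Rgt_not_eq, sin_gt_0; lra).
  assert (Hs2 : sin (th N + th N) <> 0%R) by (apply Rgt_not_eq, sin_gt_0; lra).
  unfold acoef, bcoef.
  replace ((INR k + 1) * PI / (INR N + 2))%R with (INR k * th N + th N)%R by (unfold th; field; auto).
  replace ((INR k - 1) * PI / (INR N + 2))%R with (INR k * th N - th N)%R by (unfold th; field; auto).
  replace (INR k * PI / (INR N + 2))%R with (INR k * th N)%R by (unfold th; field; auto).
  replace (2 * PI / (INR N + 2))%R with (th N + th N)%R by (unfold th; field; auto).
  replace (PI / (INR N + 2))%R with (th N) by reflexivity.
  assert (Hd : ((INR N + 2) * sin (th N) <> 0)%R) by (apply Rmult_integral_contrapositive; split; auto).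
  repeat (first [rewrite RtoC_mult | rewrite RtoC_plus | rewrite RtoC_minus | rewrite RtoC_opp | (rewrite RtoC_div; [|assumption]) | (rewrite RtoC_inv; [|assumption])]).
  rewrite !RtoC_sin.
  rewrite <- !Cexpi_mul, !Cexpi_minus, <- !Cexpi_pow. fold q. fold z.
  unfold Sterm. unfold Cdiv.
  assert (Hq : q <> 0) by apply Cexpi_neq0.
  assert (Hz : z <> 0) by apply Cexpi_neq0.
  assert (Hq1 : q - / q <> 0).
  { intro E. apply Hs1. apply RtoC_inj. rewrite RtoC_sin. fold q. unfold Cdiv. rewrite E. ceq. ring. }
  assert (Hq2 : q * q - / (q * q) <> 0).
  { intro E. apply Hs2. apply RtoC_inj. rewrite RtoC_sin, <- Cexpi_mul. fold q. unfold Cdiv. rewrite E. ceq. ring. }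
  assert (Hn2 : n + 2 <> 0).
  { intro E. apply HN2. apply RtoC_inj. rewrite RtoC_plus. exact E. }
  rewrite !Cpow_mult_l, !Cpow_inv; auto.
  2: apply Cmult_neq_0; auto.
  rewrite !Cpow_mult_l.
  set (Q := q ^ k). set (W := z ^ k).
  assert (HQ : Q <> 0) by (apply Cpow_nz; auto).
  assert (HW : W <> 0) by (apply Cpow_nz; auto).
  unfold n. clearbody Q W. ceq. field. repeat split; auto.
  - intro E. apply Hq2. replace (q * q - / (q * q)) with ((q*q*(q*q) - 1) / (q*q)) by (ceq; field; auto).
    rewrite E. ceq. field. auto.
  - intro E. apply Hq1. replace (q - / q) with ((q*q - 1) / q) by (ceq; field; auto).
    rewrite E. ceq. field. auto.
  - apply Ci_nz.
Qed.


Fixpoint rsum1 (f : nat -> R) (n : nat) : R :=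
  match n with O => 0%R | S m => (rsum1 f m + f (S m))%R end.

Lemma RtoC_rsum f n : RtoC (rsum1 f n) = csum_1 (fun k => RtoC (f k)) n.
Proof.
  induction n; simpl. reflexivity.
  rewrite RtoC_plus, IHn. reflexivity.
Qed.

Lemma csum_minus f g n : csum_1 (fun k => f k - g k) n = csum_1 f n - csum_1 g n.
Proof.
  induction n; simpl.
  - change ((0:C) = 0 - 0). ring.
  - change (csum_1 (fun k => f k - g k) n + (f (S n) - g (S n)) = (csum_1 f n + f (S n)) - (csum_1 g n + g (S n))).
    rewrite IHn. ring.
Qed.

Lemma cos_ne1 x : 0 < Rabs x < 2*PI -> cos x < 1.
Proof.
  intros H. destruct (Rle_or_lt 0 x).
  - rewrite Rabs_right in H by lra. apply cos_lt1; lra.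
  - rewrite Rabs_left in H by lra. apply cos_lt1'; lra.
Qed.

Lemma part1_sum N t : (1 <= N)%nat -> (0 < t < PI)%R -> t <> (2 * PI / (INR N + 2))%R ->
  rsum1 (fun k => acoef N k * sin (INR k * t))%R N =
       ((1 - cos (2 * PI / (INR N + 2))) / ((INR N + 2) * (1 - cos t)) *
       (sin t * (sin ((INR N + 2) * t / 2)) ^ 2
        / (cos t - cos (2 * PI / (INR N + 2))) ^ 2))%R.
Proof.
  intros HN Ht Hne.
  pose proof (th_bounds N HN) as Hth. pose proof PI_RGT_0 as HPI.
  assert (HN2 : (INR N + 2 <> 0)%R) by (pose proof (pos_INR N); lra).
  replace (2 * PI / (INR N + 2))%R with (th N + th N)%R in * by (unfold th; field; auto).
  set (n := RtoC (INR N)). set (q := Cexpi (th N) : C). set (z := Cexpi t : C).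
  assert (Hq : q <> 0) by apply Cexpi_neq0.
  assert (Hz : z <> 0) by apply Cexpi_neq0.
  assert (Hiz : /z <> 0) by (unfold z; rewrite Cexpi_inv; apply Cexpi_neq0).
  assert (Hz1 : 1 - z <> 0) by (apply nz_expi, cos_ne1; rewrite Rabs_right; lra).
  assert (Hz2 : 1 - /z <> 0) by (unfold z; rewrite Cexpi_inv; apply nz_expi, cos_ne1; rewrite Rabs_left; lra).
  assert (Hz3 : 1 - q*q*z <> 0).
  { replace (q*q*z) with (Cexpi (th N + th N + t)) by (unfold q, z; rewrite !Cexpi_mul; reflexivity).
    apply nz_expi, cos_ne1; rewrite Rabs_right; lra. }
  assert (Hz4 : 1 - z/(q*q) <> 0).
  { replace (z/(q*q)) with (Cexpi (t - (th N + th N))) by (unfold q, z; rewrite Cexpi_minus, Cexpi_mul; reflexivity).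
    apply nz_expi, cos_ne1. split. apply Rabs_pos_lt. lra. apply Rabs_def1; lra. }
  assert (Hz5 : 1 - q*q*/z <> 0).
  { replace (q*q*/z) with (Cexpi (th N + th N - t)) by (unfold q, z; rewrite Cexpi_minus, Cexpi_mul; reflexivity).
    apply nz_expi, cos_ne1. split. apply Rabs_pos_lt. lra. apply Rabs_def1; lra. }
  assert (Hz6 : 1 - /z/(q*q) <> 0).
  { replace (/z/(q*q)) with (Cexpi (- t - (th N + th N))) by (unfold q, z; rewrite Cexpi_minus, Cexpi_mul, Cexpi_inv; reflexivity).
    apply nz_expi, cos_ne1; rewrite Rabs_left; lra. }
  assert (Hq2 : q*q - 1 <> 0).
  { replace (q*q) with (Cexpi (th N + th N)) by (unfold q; rewrite Cexpi_mul; reflexivity).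
    intro E. apply (nz_expi (th N + th N)). apply cos_ne1; rewrite Rabs_right; lra.
    replace (1 - Cexpi (th N + th N)) with (- (Cexpi (th N + th N) - 1)) by (ceq; ring). rewrite E. ceq; ring. }
  assert (Hq4 : q*q*q*q - 1 <> 0).
  { replace (q*q*q*q) with (Cexpi (th N + th N + th N + th N)) by (unfold q; rewrite !Cexpi_mul; reflexivity).
    intro E. apply (nz_expi (th N + th N + th N + th N)). apply cos_ne1; rewrite Rabs_right; lra.
    replace (1 - Cexpi (th N + th N + th N + th N)) with (- (Cexpi (th N + th N + th N + th N) - 1)) by (ceq; ring). rewrite E. ceq; ring. }
  assert (Hzq : z - q*q <> 0).
  { intro E. apply Hz4. replace z with (z - q*q + q*q) by (ceq; ring). rewrite E. ceq. field. repeat split; repeat apply Cmult_neq_0; auto. }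
  assert (Hn2 : n + 2 <> 0).
  { intro E. apply HN2. apply RtoC_inj. rewrite RtoC_plus. exact E. }
  assert (HqN : q ^ N = - / (q*q)).
  { assert (E : q ^ N * q * q = -1).
    { unfold q. rewrite Cexpi_pow, !Cexpi_mul.
      replace (INR N * th N + th N + th N)%R with PI by (unfold th; field; auto).
      unfold Cexpi. rewrite cos_PI, sin_PI. reflexivity. }
    replace (q ^ N) with (q^N*q*q / (q*q)) by (ceq; field; auto). rewrite E. ceq. field. auto. }
  apply RtoC_inj. rewrite RtoC_rsum.
  rewrite (csum_ext _ (fun k => /(2*Ci) * (-4 / ((n+2)*(q - /q)*(q*q - /(q*q)))) * (Sterm n q z k - Sterm n q (/z) k))).
  2:{ intros k _. apply term_k; auto. }
  rewrite csum_scal, csum_minus. unfold n. rewrite sum_Sterm, sum_Sterm; auto.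
  rewrite Cpow_inv; auto. fold n.
  set (Z := z ^ N). assert (HZ : Z <> 0) by (apply Cpow_nz; auto).
  transitivity (/(2*Ci) * (-4 * (Sfun n q z Z - Sfun n q (/ z) (/ Z)) / ((n + 2) * (q - / q) * (q * q - / (q * q))))).
  { ceq. unfold Cdiv. ring. }
  rewrite big; auto.
  assert (Hs : (sin ((INR N + 2) * t / 2) ^ 2 = (1 - cos (INR (N+2) * t)) / 2)%R).
  { rewrite plus_INR. replace (INR 2) with 2%R by reflexivity.
    replace ((INR N + 2) * t)%R with (2 * ((INR N + 2) * t / 2))%R at 2 by field.
    rewrite cos_2a_sin. field. }
  rewrite Hs.
  assert (Hct : cos t <> cos (th N + th N)).
  { intro E. apply Hne. apply cos_inj; lra. }
  assert (D1 : ((INR N + 2) * (1 - cos t) <> 0)%R).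
  { apply Rmult_integral_contrapositive; split; auto. pose proof (cos_lt1 t). lra. }
  assert (D2 : ((cos t - cos (th N + th N)) ^ 2 <> 0)%R).
  { apply pow_nonzero. lra. }
  repeat (first [rewrite RtoC_mult | rewrite RtoC_plus | rewrite RtoC_minus | rewrite RtoC_opp | rewrite RtoC_pow
     | (rewrite RtoC_div; [|first [assumption|lra]]) | (rewrite RtoC_inv; [|assumption])]).
  rewrite !RtoC_cos, !RtoC_sin, <- Cexpi_mul, <- (Cexpi_pow t (N+2)).
  fold q z. rewrite Cpow_add_r. fold Z. unfold n.
  assert (F1 : 1 - (z + / z) / 2 <> 0).
  { intro E. assert (1 - cos t <> 0)%R by (pose proof (cos_lt1 t); lra).
    apply H. apply RtoC_inj. rewrite RtoC_minus, RtoC_cos. exact E. }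
  assert (F2 : (z + / z) / 2 - (q * q + / (q * q)) / 2 <> 0).
  { intro E. apply Hct. apply RtoC_inj. apply Ceq_minus in E. unfold z, q in E.
    rewrite RtoC_cos, RtoC_cos, <- Cexpi_mul. exact E. }
  ceq. field. repeat split; auto using Ci_nz, nzE4, nzE5.
Qed.


Open Scope R_scope.

Lemma rsum1_ext f g n : (forall k, (1 <= k <= n)%nat -> f k = g k) -> rsum1 f n = rsum1 g n.
Proof.
  induction n; intros H; simpl; [reflexivity|].
  rewrite IHn, H; [reflexivity|lia|]. intros; apply H; lia.
Qed.

Lemma rsum1_le f g n : (forall k, (1 <= k <= n)%nat -> f k <= g k) -> rsum1 f n <= rsum1 g n.
Proof.
  induction n; intros H; simpl; [lra|].
  assert (f (S n) <= g (S n)) by (apply H; lia).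
  assert (rsum1 f n <= rsum1 g n) by (apply IHn; intros; apply H; lia). lra.
Qed.

Lemma rsum1_zero f n : (forall k, (1 <= k <= n)%nat -> f k = 0) -> rsum1 f n = 0.
Proof.
  intros H. rewrite (rsum1_ext f (fun _ => 0)) by auto. clear H.
  induction n; simpl; [reflexivity|]. rewrite IHn; ring.
Qed.

Lemma rsum1_minus f g n : rsum1 (fun k => f k - g k) n = rsum1 f n - rsum1 g n.
Proof. induction n; simpl; [ring|]. rewrite IHn; ring. Qed.

Lemma rsum1_opp f n : rsum1 (fun k => - f k) n = - rsum1 f n.
Proof. induction n; simpl; [ring|]. rewrite IHn; ring. Qed.

Lemma rsum1_scal_r f c n : rsum1 (fun k => f k * c) n = rsum1 f n * c.
Proof. induction n; simpl; [ring|]. rewrite IHn; ring. Qed.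

Lemma rsum1_abs f n : Rabs (rsum1 f n) <= rsum1 (fun k => Rabs (f k)) n.
Proof.
  induction n; simpl. rewrite Rabs_R0; lra.
  eapply Rle_trans. apply Rabs_triang. lra.
Qed.

Lemma rsum1_cont (g : nat -> R -> R) n :
  (forall k, continuity (g k)) -> continuity (fun t => rsum1 (fun k => g k t) n).
Proof.
  intros H. induction n; simpl.
  - apply continuity_const. intros x y; reflexivity.
  - apply (continuity_plus (fun t => rsum1 (fun k => g k t) n) (g (S n))); auto.
Qed.

Definition Phi (a : nat -> R) N r t := rsum1 (fun k => a k * (r ^ k * sin (INR k * t))) N.

Lemma Phi_cont a N r : continuity (Phi a N r).
Proof.
  unfold Phi. apply (rsum1_cont (fun k t => a k * (r ^ k * sin (INR k * t)))).
  intros k. reg.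
Qed.

Lemma pow_le1 s k : 0 <= s <= 1 -> 0 <= s ^ k <= 1.
Proof. intros H. split. apply pow_le; lra. rewrite <- (pow1 k). apply pow_incr; lra. Qed.

Lemma pow_diff r s k : 0 <= r <= 1 -> 0 <= s <= 1 -> Rabs (r ^ k - s ^ k) <= INR k * Rabs (r - s).
Proof.
  intros Hr Hs. induction k.
  - simpl. replace (1 - 1) with 0 by ring. rewrite Rabs_R0. lra.
  - rewrite S_INR. simpl.
    replace (r * r ^ k - s * s ^ k) with (r * (r ^ k - s ^ k) + s ^ k * (r - s)) by ring.
    eapply Rle_trans. apply Rabs_triang. rewrite !Rabs_mult.
    assert (Rabs r <= 1) by (rewrite Rabs_right; lra).
    assert (Rabs (s ^ k) <= 1) by (pose proof (pow_le1 s k Hs); rewrite Rabs_right; lra).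
    pose proof (Rabs_pos (r ^ k - s ^ k)). pose proof (Rabs_pos (r - s)). nra.
Qed.


Definition Lc (a : nat -> R) N := rsum1 (fun k => Rabs (a k) * INR k) N.

Lemma Lc_pos a N : 0 <= Lc a N.
Proof.
  unfold Lc. rewrite <- (rsum1_zero (fun _ => 0) N) by auto. apply rsum1_le.
  intros. apply Rmult_le_pos. apply Rabs_pos. apply pos_INR.
Qed.

Lemma Phi_lip a N r s t : 0 <= r <= 1 -> 0 <= s <= 1 ->
  Rabs (Phi a N r t - Phi a N s t) <= Lc a N * Rabs (r - s).
Proof.
  intros Hr Hs. unfold Phi, Lc. rewrite <- rsum1_minus, <- rsum1_scal_r.
  eapply Rle_trans. apply rsum1_abs. apply rsum1_le. intros k _.
  replace (a k * (r ^ k * sin (INR k * t)) - a k * (s ^ k * sin (INR k * t)))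
    with (a k * ((r ^ k - s ^ k) * sin (INR k * t))) by ring.
  rewrite !Rabs_mult. pose proof (pow_diff r s k Hr Hs).
  assert (Rabs (sin (INR k * t)) <= 1) by apply Rabs_le, SIN_bound.
  pose proof (Rabs_pos (a k)). pose proof (Rabs_pos (r ^ k - s ^ k)). pose proof (Rabs_pos (sin (INR k * t))).
  pose proof (Rabs_pos (r - s)). pose proof (pos_INR k).
  assert (Rabs (r ^ k - s ^ k) * Rabs (sin (INR k * t)) <= INR k * Rabs (r - s)) by nra.
  replace (Rabs (a k) * INR k * Rabs (r - s)) with (Rabs (a k) * (INR k * Rabs (r - s))) by ring.
  apply Rmult_le_compat_l; auto.
Qed.

Definition clamp r := Rmax 0 (Rmin 1 r).
Lemma clamp_in r : 0 <= clamp r <= 1.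
Proof. unfold clamp, Rmax, Rmin. repeat destruct Rle_dec; lra. Qed.
Lemma clamp_id r : 0 <= r <= 1 -> clamp r = r.
Proof. intros. unfold clamp, Rmax, Rmin. repeat destruct Rle_dec; lra. Qed.
Lemma clamp_lip r s : Rabs (clamp r - clamp s) <= Rabs (r - s).
Proof. unfold clamp, Rmax, Rmin. repeat destruct Rle_dec; apply Rabs_le; split; unfold Rabs; destruct Rcase_abs; lra. Qed.

Lemma ex_tmin a N r : { tm | 0 <= tm <= PI /\ forall t, 0 <= t <= PI -> Phi a N r tm <= Phi a N r t }.
Proof.
  apply constructive_indefinite_description.
  destruct (continuity_ab_min (Phi a N r) 0 PI) as [tm [H1 H2]].
  - pose proof PI_RGT_0; lra.
  - intros c _. apply Phi_cont.
  - exists tm. split; auto.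
Qed.

Definition tmin a N r := proj1_sig (ex_tmin a N r).
Definition gmin a N r := Phi a N (clamp r) (tmin a N (clamp r)).

Lemma gmin_lip a N r s : Rabs (gmin a N r - gmin a N s) <= Lc a N * Rabs (r - s).
Proof.
  assert (K : forall r s, gmin a N s <= gmin a N r + Lc a N * Rabs (r - s)).
  { intros r0 s0. unfold gmin.
    destruct (ex_tmin a N (clamp r0)) as [t1 [Ht1 H1]] eqn:E1.
    destruct (ex_tmin a N (clamp s0)) as [t2 [Ht2 H2]] eqn:E2.
    unfold tmin. rewrite E1, E2. simpl.
    pose proof (H2 t1 Ht1).
    pose proof (Phi_lip a N (clamp r0) (clamp s0) t1 (clamp_in r0) (clamp_in s0)).
    pose proof (clamp_lip r0 s0). pose proof (Lc_pos a N).
    apply Rabs_le_between in H0. destruct H0.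
    assert (Lc a N * Rabs (clamp r0 - clamp s0) <= Lc a N * Rabs (r0 - s0)) by (apply Rmult_le_compat_l; auto).
    lra. }
  apply Rabs_le. pose proof (K r s). pose proof (K s r). rewrite Rabs_minus_sym in H0. lra.
Qed.

Lemma lip_cont (g : R -> R) L : 0 <= L -> (forall x y, Rabs (g x - g y) <= L * Rabs (x - y)) -> continuity g.
Proof.
  intros HL H x. unfold continuity_pt, continue_in, limit1_in, limit_in. simpl. unfold R_dist.
  intros eps Heps. exists (eps / (L + 1)). split.
  - apply Rdiv_lt_0_compat; lra.
  - intros y [_ Hy]. eapply Rle_lt_trans. apply H.
    apply Rle_lt_trans with ((L+1) * Rabs (y - x)). pose proof (Rabs_pos (y - x)). nra.
    apply Rmult_lt_reg_l with (/ (L+1)). apply Rinv_0_lt_compat; lra.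
    rewrite <- Rmult_assoc, Rinv_l by lra. rewrite Rmult_1_l. unfold Rdiv in Hy. lra.
Qed.

Lemma global_min a N : exists r0 t0, 0 <= r0 <= 1 /\ 0 <= t0 <= PI /\
  forall r t, 0 <= r <= 1 -> 0 <= t <= PI -> Phi a N r0 t0 <= Phi a N r t.
Proof.
  destruct (continuity_ab_min (gmin a N) 0 1) as [r0 [H2 H1]].
  - lra.
  - intros c _. apply (lip_cont _ (Lc a N)). apply Lc_pos. apply gmin_lip.
  - exists r0, (tmin a N r0). unfold tmin.
    destruct (ex_tmin a N r0) as [t0 [Ht0 H0]] eqn:E0. simpl.
    split; auto. split; auto. intros r t Hr Ht.
    specialize (H2 r Hr). unfold gmin, tmin in H2. rewrite !clamp_id in H2 by auto.
    rewrite E0 in H2. simpl in H2.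
    destruct (ex_tmin a N r) as [t1 [Ht1 H3]]. simpl in H2.
    specialize (H3 t Ht). lra.
Qed.


Open Scope C_scope.
Definition Fc (a : nat -> R) N (z : C) : C := csum_1 (fun k => RtoC (a k) * z ^ k) N.
Definition Psi a N z := Im (Fc a N z).

Lemma Im_csum f n : Im (csum_1 f n) = rsum1 (fun k => Im (f k)) n.
Proof. induction n; simpl. reflexivity. rewrite <- IHn. reflexivity. Qed.

Lemma Psi_polar a N r t : Psi a N (RtoC r * Cexpi t) = Phi a N r t.
Proof.
  unfold Psi, Fc, Phi. rewrite Im_csum. apply rsum1_ext. intros k _.
  rewrite Cpow_mult_l, Cexpi_pow, <- RtoC_pow, im_scal_l.
  unfold Cexpi, RtoC, Cmult, Im; simpl. ring.
Qed.

Lemma Psi_real a N x : Psi a N (x, 0%R) = 0%R.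
Proof.
  unfold Psi, Fc. rewrite Im_csum. apply rsum1_zero. intros k _.
  change (x, 0%R) with (RtoC x). rewrite <- RtoC_pow, <- RtoC_mult. apply im_RtoC.
Qed.

Lemma Psi_conj a N z : Psi a N (Cconj z) = (- Psi a N z)%R.
Proof.
  unfold Psi, Fc. rewrite !Im_csum, <- rsum1_opp. apply rsum1_ext. intros k _.
  rewrite <- Cpow_conj. destruct (z ^ k) as [u v]. unfold Cconj, RtoC, Cmult, Im; simpl. ring.
Qed.

Fixpoint csum0 (f : nat -> C) (M : nat) : C :=
  match M with O => 0 | S m => csum0 f m + f m end.
Fixpoint rsum0 (f : nat -> R) (M : nat) : R :=
  match M with O => 0%R | S m => (rsum0 f m + f m)%R end.

Lemma csum0_ext f g M : (forall l, (l < M)%nat -> f l = g l) -> csum0 f M = csum0 g M.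
Proof.
  induction M; intros H; simpl; [reflexivity|].
  rewrite IHM, H; [reflexivity|lia|]. intros; apply H; lia.
Qed.

Lemma csum0_plus f g M : csum0 (fun l => f l + g l) M = csum0 f M + csum0 g M.
Proof. induction M; simpl. ceq; ring. rewrite IHM. ceq; ring. Qed.

Lemma csum0_scal c f M : csum0 (fun l => c * f l) M = c * csum0 f M.
Proof. induction M; simpl. ceq; ring. rewrite IHM. ceq; ring. Qed.

Lemma csum0_const M : csum0 (fun _ => 1) M = RtoC (INR M).
Proof.
  induction M; simpl csum0. reflexivity. rewrite IHM, S_INR, RtoC_plus. reflexivity.
Qed.

Lemma csum0_geom (w : C) M : 1 - w <> 0 -> csum0 (fun l => w ^ l) M = (1 - w ^ M) / (1 - w).
Proof.
  intros H. induction M; simpl csum0.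
  - simpl. ceq. field. auto.
  - rewrite IHM, Cpow_S. ceq. field. auto.
Qed.

Lemma csum0_swap (g : nat -> nat -> C) N M :
  csum0 (fun l => csum_1 (fun k => g k l) N) M = csum_1 (fun k => csum0 (fun l => g k l) M) N.
Proof.
  induction M; simpl csum0.
  - induction N. reflexivity. rewrite csum_S, <- IHN. simpl. ceq; ring.
  - rewrite IHM. rewrite <- csum_plus. reflexivity.
Qed.

Lemma Im_csum0 f M : Im (csum0 f M) = rsum0 (fun l => Im (f l)) M.
Proof. induction M; simpl. reflexivity. rewrite <- IHM. reflexivity. Qed.

Definition om M := Cexpi (2 * PI / INR M).

Lemma om_M M : (0 < M)%nat -> (om M : C) ^ M = 1.
Proof.
  intros H. unfold om. rewrite Cexpi_pow.
  replace (INR M * (2 * PI / INR M))%R with (2 * PI)%R by (field; apply not_0_INR; lia).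
  unfold Cexpi. rewrite cos_2PI, sin_2PI. reflexivity.
Qed.

Lemma om_ne1 M i : (1 <= i < M)%nat -> 1 - (om M : C) ^ i <> 0.
Proof.
  intros H. unfold om. rewrite Cexpi_pow. apply nz_expi, cos_lt1.
  assert (0 < INR M)%R by (apply lt_0_INR; lia).
  assert (1 <= INR i)%R by (apply (le_INR 1); lia).
  assert (INR i < INR M)%R by (apply lt_INR; lia). pose proof PI_RGT_0.
  split.
  - apply Rmult_lt_0_compat. lra. apply Rdiv_lt_0_compat; lra.
  - replace (INR i * (2 * PI / INR M))%R with (2 * PI * (INR i / INR M))%R by (field; lra).
    rewrite <- (Rmult_1_r (2*PI)) at 2. apply Rmult_lt_compat_l. lra.
    apply (Rmult_lt_reg_r (INR M)); auto. unfold Rdiv. rewrite Rmult_assoc, Rinv_l by lra. lra.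
Qed.

Definition Aki M (c : C) (rho : R) k i :=
  csum0 (fun l => ((om M : C) ^ l) ^ i * (c + RtoC rho * (om M : C) ^ l) ^ k) M.

Lemma Aki_val M c rho k : forall i, (k + i < M)%nat ->
  Aki M c rho k i = if Nat.eqb i 0 then RtoC (INR M) * c ^ k else 0.
Proof.
  induction k; intros i Hki.
  - unfold Aki. rewrite (csum0_ext _ (fun l => ((om M : C) ^ i) ^ l)).
    2:{ intros l _. rewrite <- !Cpow_mult_r, Nat.mul_comm. simpl Cpow at 2. ceq; ring. }
    destruct (Nat.eqb_spec i 0).
    + subst i. simpl Cpow at 1. rewrite (csum0_ext _ (fun _ => 1)).
      2:{ intros. apply Cpow_1_l. }
      rewrite csum0_const. simpl. ceq; ring.
    + rewrite csum0_geom. rewrite <- Cpow_mult_r, Nat.mul_comm, Cpow_mult_r, om_M by lia.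
      rewrite Cpow_1_l. ceq. field. apply om_ne1; lia. apply om_ne1; lia.
  - assert (E : Aki M c rho (S k) i = c * Aki M c rho k i + RtoC rho * Aki M c rho k (S i)).
    { unfold Aki. rewrite <- !csum0_scal, <- csum0_plus. apply csum0_ext. intros l _.
      rewrite !Cpow_S. ceq; ring. }
    rewrite E, IHk, IHk by lia.
    simpl (Nat.eqb (S i) 0). destruct (Nat.eqb i 0); rewrite ?Cpow_S; ceq; ring.
Qed.

Lemma mean_value a N M (c : C) (rho : R) : (N < M)%nat ->
  csum0 (fun l => Fc a N (c + RtoC rho * (om M : C) ^ l)) M = RtoC (INR M) * Fc a N c.
Proof.
  intros H. unfold Fc. rewrite csum0_swap, <- csum_scal. apply csum_ext. intros k Hk.
  rewrite csum0_scal.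
  assert (E := Aki_val M c rho k 0). rewrite Nat.add_0_r in E. specialize (E ltac:(lia)).
  unfold Aki in E. simpl Nat.eqb in E.
  rewrite (csum0_ext _ (fun l => ((om M : C) ^ l) ^ 0 * (c + RtoC rho * (om M : C) ^ l) ^ k)).
  2:{ intros. simpl Cpow at 2. ceq; ring. }
  rewrite E. ceq; ring.
Qed.


Open Scope R_scope.

Lemma polar_rep (x y : R) : x ^ 2 + y ^ 2 <= 1 -> 0 <= y ->
  exists r t, 0 <= r <= 1 /\ 0 <= t <= PI /\ ((x, y) : C) = (RtoC r * Cexpi t)%C.
Proof.
  intros H Hy. set (r := sqrt (x ^ 2 + y ^ 2)).
  assert (Hr2 : r * r = x ^ 2 + y ^ 2) by (apply sqrt_sqrt; nra).
  assert (Hr0 : 0 <= r) by apply sqrt_pos.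
  assert (Hr1 : r <= 1) by (rewrite <- sqrt_1; apply sqrt_le_1_alt; lra).
  destruct (Req_dec r 0) as [E|E].
  - exists 0, 0. split. lra. split. pose proof PI_RGT_0; lra.
    assert (x = 0) by nra. assert (y = 0) by nra. subst x y.
    unfold RtoC, Cexpi, Cmult; simpl. f_equal; ring.
  - assert (Hr : 0 < r) by lra.
    assert (Hx : -1 <= x / r <= 1).
    { split; apply (Rmult_le_reg_r r); auto; unfold Rdiv; rewrite Rmult_assoc, Rinv_l, Rmult_1_r by lra; nra. }
    exists r, (acos (x / r)). split. lra. split. apply acos_bound.
    unfold RtoC, Cexpi, Cmult; simpl. rewrite cos_acos, sin_acos by auto.
    assert (Hs : sqrt (1 - (x / r)²) = y / r).
    { replace (1 - (x / r)²) with ((y / r)²).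
      2:{ unfold Rsqr. apply (Rmult_eq_reg_r (r*r)); [|nra].
          replace (y / r * (y / r) * (r * r)) with (y*y) by (field; lra).
          replace ((1 - x / r * (x / r)) * (r * r)) with (r*r - x*x) by (field; lra). nra. }
      apply sqrt_Rsqr. apply Rdiv_le_0_compat; lra. }
    rewrite Hs. f_equal; field; lra.
Qed.

Lemma rsum0_all_eq f M mu : (forall l, (l < M)%nat -> mu <= f l) -> rsum0 f M = INR M * mu ->
  forall l, (l < M)%nat -> f l = mu.
Proof.
  intros H1 H2.
  assert (K : forall M', (M' <= M)%nat -> forall l, (l < M')%nat -> f l - mu <= rsum0 f M' - INR M' * mu).
  { induction M'; intros HM l Hl. lia. simpl rsum0. rewrite S_INR.
    assert (forall M'', (M'' <= M)%nat -> 0 <= rsum0 f M'' - INR M'' * mu).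
    { induction M''; intros. simpl. lra. simpl rsum0. rewrite S_INR.
      specialize (IHM'' ltac:(lia)). specialize (H1 M'' ltac:(lia)). lra. }
    destruct (Nat.eq_dec l M').
    + subst. specialize (H M' ltac:(lia)). lra.
    + specialize (IHM' ltac:(lia) l ltac:(lia)). specialize (H1 M' ltac:(lia)). lra. }
  intros l Hl. specialize (K M (le_n M) l Hl). specialize (H1 l Hl). lra.
Qed.

Lemma Phi_r0 a N t : Phi a N 0 t = 0.
Proof. unfold Phi. apply rsum1_zero. intros k Hk. rewrite pow_i by lia. ring. Qed.

Lemma sin_kPI k : sin (INR k * PI) = 0.
Proof. apply sin_eq_0_1. exists (Z.of_nat k). rewrite INR_IZR_INZ. reflexivity. Qed.

Lemma Phi_t0 a N r : Phi a N r 0 = 0.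
Proof. unfold Phi. apply rsum1_zero. intros k Hk. rewrite Rmult_0_r, sin_0. ring. Qed.

Lemma Phi_tPI a N r : Phi a N r PI = 0.
Proof. unfold Phi. apply rsum1_zero. intros k Hk. rewrite sin_kPI. ring. Qed.


Lemma pt_shift (c : C) (rho th : R) :
  (c + RtoC rho * Cexpi th)%C = ((fst c + rho * cos th)%R, (snd c + rho * sin th)%R).
Proof. destruct c. unfold RtoC, Cexpi, Cmult, Cplus; simpl. f_equal; ring. Qed.

Lemma upper a N : (forall t, 0 <= t <= PI -> 0 <= Phi a N 1 t) ->
  forall x y, x ^ 2 + y ^ 2 <= 1 -> 0 <= y -> 0 <= Psi a N (x, y).
Proof.
  intros Hb x y Hxy Hy.
  destruct (global_min a N) as [r0 [t0 [Hr0 [Ht0 Hmin]]]].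
  set (mu := Phi a N r0 t0) in *.
  assert (Hglob : forall u v, u ^ 2 + v ^ 2 <= 1 -> 0 <= v -> mu <= Psi a N (u, v)).
  { intros u v H1 H2. destruct (polar_rep u v H1 H2) as [r [t [Hr [Ht E]]]].
    rewrite E, Psi_polar. apply Hmin; auto. }
  destruct (Rle_dec 0 mu) as [Hmu|Hmu].
  { specialize (Hglob x y Hxy Hy). lra. }
  exfalso. apply Rnot_le_lt in Hmu.
  pose proof PI_RGT_0 as HPI.
  assert (Hr0a : r0 <> 0) by (intro E; unfold mu in Hmu; rewrite E, Phi_r0 in Hmu; lra).
  assert (Hr0b : r0 <> 1) by (intro E; unfold mu in Hmu; rewrite E in Hmu; specialize (Hb t0 Ht0); lra).
  assert (Ht0a : t0 <> 0) by (intro E; unfold mu in Hmu; rewrite E, Phi_t0 in Hmu; lra).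
  assert (Ht0b : t0 <> PI) by (intro E; unfold mu in Hmu; rewrite E, Phi_tPI in Hmu; lra).
  set (x0 := r0 * cos t0). set (y0 := r0 * sin t0).
  assert (Hs0 : 0 < sin t0) by (apply sin_gt_0; lra).
  assert (Hy0 : 0 < y0) by (unfold y0; apply Rmult_lt_0_compat; lra).
  assert (Hn0 : x0 ^ 2 + y0 ^ 2 = r0 ^ 2) by (unfold x0, y0; pose proof (sc2 t0); nra).
  destruct (INR_unbounded (y0 / (1 - r0))) as [K HK].
  assert (HK0 : 0 < INR K).
  { assert (0 < y0 / (1 - r0)) by (apply Rdiv_lt_0_compat; lra). lra. }
  set (rho := y0 / INR K).
  assert (Hrho : 0 < rho) by (apply Rdiv_lt_0_compat; lra).
  assert (Hrho1 : rho <= 1 - r0).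
  { unfold rho. apply (Rmult_le_reg_r (INR K)); auto. unfold Rdiv. rewrite Rmult_assoc, Rinv_l, Rmult_1_r by lra.
    apply (Rmult_lt_compat_r (1 - r0)) in HK; [|lra]. unfold Rdiv in HK.
    rewrite Rmult_assoc, Rinv_l, Rmult_1_r in HK by lra. nra. }
  set (M := (4 * (N + 1))%nat).
  assert (HM : (N < M)%nat) by (unfold M; lia).
  assert (Hl3 : ((om M : C) ^ (3 * (N + 1)))%C = ((0%R, (-1)%R) : C)).
  { unfold om. rewrite Cexpi_pow. unfold M.
    replace (INR (3 * (N + 1)) * (2 * PI / INR (4 * (N + 1))))%R with (3 * (PI / 2))%R.
    unfold Cexpi. rewrite cos_3PI2, sin_3PI2. reflexivity.
    rewrite !mult_INR, plus_INR. simpl INR. field. pose proof (pos_INR N). lra. }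
  assert (Hchain : forall j, (j <= K)%nat -> Psi a N (x0, y0 - INR j * rho) = mu).
  { induction j; intros Hj.
    - simpl INR. replace (y0 - 0 * rho) with y0 by ring.
      replace ((x0, y0) : C) with (RtoC r0 * Cexpi t0)%C.
      rewrite Psi_polar. reflexivity.
      unfold RtoC, Cexpi, Cmult, x0, y0; simpl. f_equal; ring.
    - specialize (IHj ltac:(lia)).
      set (yc := y0 - INR j * rho) in *.
      assert (Hyc : rho <= yc).
      { unfold yc. assert (INR (S j) <= INR K) by (apply le_INR; lia). rewrite S_INR in H.
        replace y0 with (INR K * rho) by (unfold rho; field; lra).
        assert (0 <= (INR K - (INR j + 1)) * rho) by (apply Rmult_le_pos; lra). nra. }
      assert (Hyc2 : yc <= y0) by (unfold yc; pose proof (pos_INR j); nra).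
      set (c := ((x0, yc) : C)).
      assert (Hpts : forall l, (l < M)%nat -> mu <= Psi a N (c + RtoC rho * (om M : C) ^ l)%C).
      { intros l _. unfold om. rewrite Cexpi_pow, pt_shift. simpl fst. simpl snd.
        set (th := (INR l * (2 * PI / INR M))%R). pose proof (sc2 th).
        pose proof (SIN_bound th). pose proof (COS_bound th).
        apply Hglob.
        - assert (Hu : (x0 * cos th + yc * sin th) ^ 2 <= r0 ^ 2).
          { assert (0 <= (x0 * sin th - yc * cos th) ^ 2) by apply pow2_ge_0.
            assert (yc ^ 2 <= y0 ^ 2) by nra. nra. }
          assert (Hu2 : x0 * cos th + yc * sin th <= r0) by nra.
          nra.
        - nra. }
      assert (Hsum : rsum0 (fun l => Psi a N (c + RtoC rho * (om M : C) ^ l)%C) M = INR M * mu).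
      { unfold Psi. rewrite <- Im_csum0, mean_value by auto. rewrite im_scal_l.
        change (Im (Fc a N c)) with (Psi a N c). unfold c. rewrite IHj. reflexivity. }
      pose proof (rsum0_all_eq _ M mu Hpts Hsum (3 * (N+1)) ltac:(unfold M; lia)) as E.
      cbv beta in E. rewrite Hl3 in E. rewrite S_INR. rewrite <- E. f_equal. unfold c, RtoC, Cmult, Cplus; simpl.
      unfold yc. f_equal; ring. }
  specialize (Hchain K (le_n K)).
  replace (y0 - INR K * rho) with 0 in Hchain by (unfold rho; field; lra).
  rewrite Psi_real in Hchain. lra.
Qed.


Lemma typ_real a N : (forall t, 0 <= t <= PI -> 0 <= Phi a N 1 t) ->
  forall z : C, fst z ^ 2 + snd z ^ 2 < 1 -> 0 <= Psi a N z * snd z.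
Proof.
  intros Hb [x y] Hz. simpl in Hz |- *.
  destruct (Rle_dec 0 y).
  - pose proof (upper a N Hb x y ltac:(lra) r). nra.
  - assert (E : Psi a N (x, y) = - Psi a N (x, - y)).
    { change ((x, - y) : C) with (Cconj (x, y)). rewrite Psi_conj. ring. }
    pose proof (upper a N Hb x (- y) ltac:(nra) ltac:(lra)). nra.
Qed.

Lemma Cscale_eq r (w : C) : Cscale r w = (RtoC r * w)%C.
Proof. destruct w. unfold Cscale, RtoC, Cmult; simpl. apply injective_projections; simpl; ring. Qed.

Lemma PN_eq N z : PN N z = Fc (acoef N) N z.
Proof.
  unfold PN, Fc, acoef. rewrite Cscale_eq.
  rewrite (csum_ext _ (fun k => RtoC (bcoef N k * sin (INR k * PI / (INR N + 2))) * z ^ k)%C).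
  2:{ intros k _. rewrite Cscale_eq, Cpow_eq. reflexivity. }
  rewrite <- csum_scal. apply csum_ext. intros k _. rewrite !RtoC_mult. ceq; ring.
Qed.

Lemma Im_PN N z : Defs.Im (PN N z) = Psi (acoef N) N z.
Proof. rewrite PN_eq. reflexivity. Qed.

Lemma Im_PN_circle N t : Defs.Im (PN N (Cexpi t)) = Phi (acoef N) N 1 t.
Proof.
  rewrite Im_PN, <- Psi_polar. f_equal. unfold RtoC, Cexpi, Cmult; simpl. f_equal; ring.
Qed.

Lemma Phi1_eq a N t : Phi a N 1 t = rsum1 (fun k => a k * sin (INR k * t)) N.
Proof. unfold Phi. apply rsum1_ext. intros. rewrite pow1. ring. Qed.

Definition RHSf N t := ((1 - cos (2 * PI / (INR N + 2))) / ((INR N + 2) * (1 - cos t)) *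
       (sin t * (sin ((INR N + 2) * t / 2)) ^ 2
        / (cos t - cos (2 * PI / (INR N + 2))) ^ 2)).

Lemma part1 N t : (1 <= N)%nat -> 0 < t < PI -> t <> 2 * PI / (INR N + 2) ->
  Defs.Im (PN N (Cexpi t)) = RHSf N t.
Proof.
  intros. rewrite Im_PN_circle, Phi1_eq. apply part1_sum; auto.
Qed.

Lemma RHS_nonneg N t : (1 <= N)%nat -> 0 < t < PI -> t <> 2 * PI / (INR N + 2) -> 0 <= RHSf N t.
Proof.
  intros HN Ht Hne. unfold RHSf.
  pose proof (th_bounds N HN) as Hth. unfold th in Hth.
  assert (E : 2 * PI / (INR N + 2) = 2 * (PI / (INR N + 2))) by (unfold Rdiv; ring).
  rewrite E in *.
  assert (HN2 : 0 < INR N + 2) by (pose proof (pos_INR N); lra).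
  assert (Hct : cos t <> cos (2 * (PI / (INR N + 2)))).
  { intro C. apply Hne. apply cos_inj; lra. }
  apply Rmult_le_pos.
  - apply Rdiv_le_0_compat. pose proof (COS_bound (2 * (PI / (INR N + 2)))). lra.
    apply Rmult_lt_0_compat. lra. pose proof (cos_lt1 t). lra.
  - apply Rdiv_le_0_compat. apply Rmult_le_pos. left; apply sin_gt_0; lra. apply pow2_ge_0.
    apply pow2_gt_0. lra.
Qed.

Lemma part2 N : (1 <= N)%nat -> forall t, 0 <= t <= PI -> 0 <= Phi (acoef N) N 1 t.
Proof.
  intros HN.
  assert (Hgen : forall t, 0 < t < PI -> t <> 2 * PI / (INR N + 2) -> 0 <= Phi (acoef N) N 1 t).
  { intros t Ht Hne. rewrite <- Im_PN_circle, part1 by auto. apply RHS_nonneg; auto. }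
  pose proof (th_bounds N HN) as Hth. unfold th in Hth. pose proof PI_RGT_0.
  set (t0 := 2 * PI / (INR N + 2)). fold t0 in Hgen.
  assert (Ht0 : 0 < t0 < PI) by (unfold t0; unfold Rdiv in *; lra).
  assert (H0 : 0 <= Phi (acoef N) N 1 t0).
  { destruct (Rle_dec 0 (Phi (acoef N) N 1 t0)) as [|Hn]; auto. exfalso.
    apply Rnot_le_lt in Hn.
    pose proof (Phi_cont (acoef N) N 1 t0) as Hc.
    unfold continuity_pt, continue_in, limit1_in, limit_in in Hc. simpl in Hc. unfold R_dist, D_x, no_cond in Hc.
    destruct (Hc (- Phi (acoef N) N 1 t0) ltac:(lra)) as [d [Hd Hd2]].
    set (x := t0 + Rmin (d/2) ((PI - t0)/2)).
    assert (Hm1 : 0 < Rmin (d/2) ((PI - t0)/2)) by (apply Rmin_glb_lt; lra).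
    assert (Hm2 : Rmin (d/2) ((PI - t0)/2) <= d/2) by apply Rmin_l.
    assert (Hm3 : Rmin (d/2) ((PI - t0)/2) <= (PI - t0)/2) by apply Rmin_r.
    specialize (Hd2 x). assert (Hx : 0 <= Phi (acoef N) N 1 x) by (apply Hgen; [unfold x; lra | unfold x; intro; lra]).
    assert (H1 : Rabs (Phi (acoef N) N 1 x - Phi (acoef N) N 1 t0) < - Phi (acoef N) N 1 t0).
    { apply Hd2. split. split. auto. unfold x; intro; lra. unfold x. rewrite Rabs_right; lra. }
    rewrite Rabs_right in H1; lra. }
  intros t Ht.
  destruct (Req_dec t 0). subst. rewrite Phi_t0. lra.
  destruct (Req_dec t PI). subst. rewrite Phi_tPI. lra.
  destruct (Req_dec t t0). subst. auto.
  apply Hgen; auto. lra.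
Qed.

End Aux.

Theorem mainTheorem3 (N : nat) (HN : (1 <= N)%nat) :
  (forall t : R, 0 < t < PI -> t <> 2 * PI / (INR N + 2) ->
     Im (PN N (Cexpi t)) =
       (1 - cos (2 * PI / (INR N + 2))) / ((INR N + 2) * (1 - cos t)) *
       (sin t * (sin ((INR N + 2) * t / 2)) ^ 2
        / (cos t - cos (2 * PI / (INR N + 2))) ^ 2)) /\
  (forall t : R, 0 <= t <= PI -> 0 <= Im (PN N (Cexpi t))) /\
  (forall z : Cplx, Cmod z < 1 -> 0 <= Im (PN N z) * Im z).
Proof.
  split; [|split].
  - intros t Ht Hne. apply Aux.part1; auto.
  - intros t Ht. rewrite Aux.Im_PN_circle. apply Aux.part2; auto.
  - intros z Hz. rewrite Aux.Im_PN. apply Aux.typ_real. apply Aux.part2; auto.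
    unfold Cmod in Hz. rewrite <- sqrt_1 in Hz. apply sqrt_lt_0_alt in Hz. exact Hz.
Qed.
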